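(* Let $G\in\mathfrak D_4$ and let $\Upsilon\subseteq G$ be a subgraph isomorphic to the Mycielski–Grötzsch graph, with vertices labelled $a_j,b_j$ ($j\in\mathbb Z/5\mathbb Z$), $c$ as below. If $i\in\mathbb Z/5\mathbb Z$ and $q\in V(G)$ is adjacent to both $a_{i-1}$ and $a_{i+1}$, then $q$ is adjacent to $a_i$.
   Context: $\mathfrak D_4$ is the class of (finite) maximal triangle-free graphs satisfying property $\mathscr{D}_4$. Maximal triangle-free: no triangle, and adding any new edge creates a triangle. Property $\mathscr{D}_k$: for every $m\in\{1,\dots,k\}$ and every sequence $x_1,\dots,x_{3m}$ of (not necessarily distinct) vertices there is a vertex $y$ with $|\{i\in[3m]: x_iy\in E(G)\}|\ge m+1$. Mycielski–Grötzsch graph: vertices $a_j,b_j$ ($j\in\mathbb Z/5\mathbb Z$) and $c$; its edges are exactly all pairs $a_jc$, $a_jb_{j+2}$, $a_jb_{j-2}$, $b_jb_{j+2}$. *)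

(* Defs.v *)
From mathcomp Require Import all_boot all_algebra.
Set Implicit Arguments. Unset Strict Implicit. Unset Printing Implicit Defensive.
Import GRing.Theory.

Definition simple_graph (T : finType) (e : rel T) : Prop :=
  symmetric e /\ irreflexive e.

Definition triangle_free (T : finType) (e : rel T) : Prop :=
  forall x y z : T, ~ [&& e x y, e y z & e x z].

(* Maximal triangle-free: triangle-free, and adding any new edge (between
   distinct non-adjacent vertices) creates a triangle, i.e. the two
   endpoints have a common neighbour. *)
Definition maximal_triangle_free (T : finType) (e : rel T) : Prop :=
  triangle_free e /\
  forall u v : T, u != v -> ~~ e u v -> exists w : T, e u w && e w v.

Definition propD (k : nat) (T : finType) (e : rel T) : Prop :=
  forall m : nat, 1 <= m <= k ->
  forall x : 'I_(3 * m) -> T,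
  exists y : T, m.+1 <= #|[set i : 'I_(3 * m) | e (x i) y]|.

Definition in_frakD4 (T : finType) (e : rel T) : Prop :=
  simple_graph e /\ maximal_triangle_free e /\ propD 4 e.

(* A (not necessarily induced) subgraph of G isomorphic to the
   Mycielski–Grötzsch graph, with vertices a_j, b_j (j in Z/5Z) and c:
   the 11 vertices are pairwise distinct and all edges a_j c,
   a_j b_(j+2), a_j b_(j-2), b_j b_(j+2) are edges of G. *)
Definition MG_subgraph (T : finType) (e : rel T)
    (a b : 'Z_5 -> T) (c : T) : Prop :=
  [/\ injective a, injective b,
      (forall i j, a i != b j),
      (forall j, a j != c /\ b j != c) &
      (forall j : 'Z_5,
         [/\ e (a j) c, e (a j) (b (j + 2)%R), e (a j) (b (j - 2)%R)
           & e (b j) (b (j + 2)%R)])].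

(* Main.v *)
Require Import Defs.
From mathcomp Require Import all_boot all_algebra.
Set Implicit Arguments. Unset Strict Implicit.

Lemma cnt (T : Type) (P : pred T) (x0 : T) (s : seq T) n : size s = n ->
  #|[set i : 'I_n | P (nth x0 s i)]| = count P s.
Proof.
move=> hs; rewrite cardsE cardE /enum_mem size_filter.
rewrite -(count_map (fun i : 'I_n => nth x0 s i)).
congr count.
rewrite -[in RHS](mkseq_nth x0 s) hs /mkseq -val_enum_ord -map_comp.
by rewrite enumT.
Qed.

Lemma getD (T : finType) (e : rel T) (D : propD 4 e) (m : nat) (hm : (1 <= m <= 4)%N)
  (x0 : T) (s : seq T) : size s = (3 * m)%N ->
  exists y, (m.+1 <= count (fun v => e v y) s)%N.
Proof.
move=> hs; have [y Hy] := D m hm (fun i => nth x0 s i).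
exists y; by rewrite -(cnt (fun v => e v y) x0 hs).
Qed.

Lemma tri (T : finType) (e : rel T) (tf : triangle_free e) u v :
  e u v -> forall z, ~~ (e u z && e v z).
Proof.
move=> uv z; apply/negP => /andP[uz vz]; apply: (tf u v z).
by rewrite uv vz uz.
Qed.

Lemma core (T : finType) (e : rel T) (tf : triangle_free e)
  (mx : forall u v : T, u != v -> ~~ e u v -> exists w : T, e u w && e w v)
  (D : propD 4 e) (a0 a1 a2 a3 a4 b0 b1 b2 b3 b4 c q : T)
  (c0 : e a0 c) (c1 : e a1 c) (c2 : e a2 c) (c3 : e a3 c) (c4 : e a4 c)
  (h02 : e a0 b2) (h03 : e a0 b3) (h13 : e a1 b3) (h14 : e a1 b4)
  (h24 : e a2 b4) (h20 : e a2 b0) (h30 : e a3 b0) (h31 : e a3 b1)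
  (h41 : e a4 b1) (h42 : e a4 b2)
  (g02 : e b0 b2) (g13 : e b1 b3) (g24 : e b2 b4) (g30 : e b3 b0) (g41 : e b4 b1)
  (q4 : e q a4) (q1 : e q a1) : e q a0.
Proof.
case E: (e q a0) => //.
have nq : q != a0.
  apply/eqP => qa; subst q; apply: (tf a0 a4 c); by rewrite q4 c4 c0.
have [w /andP[qw wa0]] := mx q a0 nq (negbT E).
exfalso.
have [y Hy] := getD D (m:=3) isT q (s:=[:: a0; a1; a4; b1; b2; b3; b4; q; w]) erefl.
have G : [|| [&& e a0 y, e b1 y & e q y], [&& e a0 y, e b4 y & e q y], [&& e a1 y, e b1 y, e b2 y & e w y] | [&& e a4 y, e b3 y, e b4 y & e w y]].
{ move: Hy => /=.
move: (tri tf h02 y) (tri tf h03 y) (tri tf h13 y) (tri tf h14 y) (tri tf h41 y) (tri tf h42 y) (tri tf g13 y) (tri tf g24 y) (tri tf g41 y) (tri tf q4 y) (tri tf q1 y) (tri tf qw y) (tri tf wa0 y).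
move: (e a0 y) (e a1 y) (e a4 y) (e b1 y) (e b2 y) (e b3 y) (e b4 y) (e q y) (e w y).
by do 9!(case; try done). }
case/or4P: G => [/and3P[ya0 yb1 yq]|/and3P[ya0 yb4 yq]|/and4P[ya1 yb1 yb2 yw]|/and4P[ya4 yb3 yb4 yw]].
- have [z Hz] := getD D (m:=4) isT q (s:=[:: y; a0; a1; a2; a4; b0; b1; b2; b3; b4; c; q]) erefl.
move: Hz => /=.
move: (tri tf c0 z) (tri tf c1 z) (tri tf c2 z) (tri tf c4 z) (tri tf h02 z) (tri tf h03 z) (tri tf h13 z) (tri tf h14 z) (tri tf h24 z) (tri tf h20 z) (tri tf h41 z) (tri tf h42 z) (tri tf g02 z) (tri tf g13 z) (tri tf g24 z) (tri tf g30 z) (tri tf g41 z) (tri tf q4 z) (tri tf q1 z) (tri tf ya0 z) (tri tf yb1 z) (tri tf yq z).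
move: (e y z) (e a0 z) (e a1 z) (e a2 z) (e a4 z) (e b0 z) (e b1 z) (e b2 z) (e b3 z) (e b4 z) (e c z) (e q z).
by do 12!(case; try done).
- have [z Hz] := getD D (m:=4) isT q (s:=[:: y; a0; a4; a3; a1; b0; b4; b3; b2; b1; c; q]) erefl.
move: Hz => /=.
move: (tri tf c0 z) (tri tf c1 z) (tri tf c3 z) (tri tf c4 z) (tri tf h02 z) (tri tf h03 z) (tri tf h13 z) (tri tf h14 z) (tri tf h30 z) (tri tf h31 z) (tri tf h41 z) (tri tf h42 z) (tri tf g02 z) (tri tf g13 z) (tri tf g24 z) (tri tf g30 z) (tri tf g41 z) (tri tf q4 z) (tri tf q1 z) (tri tf ya0 z) (tri tf yb4 z) (tri tf yq z).
move: (e y z) (e a0 z) (e a4 z) (e a3 z) (e a1 z) (e b0 z) (e b4 z) (e b3 z) (e b2 z) (e b1 z) (e c z) (e q z).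
by do 12!(case; try done).
- have [z Hz] := getD D (m:=4) isT q (s:=[:: y; a0; a1; a3; a4; b0; b1; b2; b3; c; q; w]) erefl.
move: Hz => /=.
move: (tri tf c0 z) (tri tf c1 z) (tri tf c3 z) (tri tf c4 z) (tri tf h02 z) (tri tf h03 z) (tri tf h13 z) (tri tf h30 z) (tri tf h31 z) (tri tf h41 z) (tri tf h42 z) (tri tf g02 z) (tri tf g13 z) (tri tf g30 z) (tri tf q4 z) (tri tf q1 z) (tri tf qw z) (tri tf wa0 z) (tri tf ya1 z) (tri tf yb1 z) (tri tf yb2 z) (tri tf yw z).
move: (e y z) (e a0 z) (e a1 z) (e a3 z) (e a4 z) (e b0 z) (e b1 z) (e b2 z) (e b3 z) (e c z) (e q z) (e w z).
by do 12!(case; try done).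
- have [z Hz] := getD D (m:=4) isT q (s:=[:: y; a0; a4; a2; a1; b0; b4; b3; b2; c; q; w]) erefl.
move: Hz => /=.
move: (tri tf c0 z) (tri tf c1 z) (tri tf c2 z) (tri tf c4 z) (tri tf h02 z) (tri tf h03 z) (tri tf h13 z) (tri tf h14 z) (tri tf h24 z) (tri tf h20 z) (tri tf h42 z) (tri tf g02 z) (tri tf g24 z) (tri tf g30 z) (tri tf q4 z) (tri tf q1 z) (tri tf qw z) (tri tf wa0 z) (tri tf ya4 z) (tri tf yb3 z) (tri tf yb4 z) (tri tf yw z).
move: (e y z) (e a0 z) (e a4 z) (e a2 z) (e a1 z) (e b0 z) (e b4 z) (e b3 z) (e b2 z) (e c z) (e q z) (e w z).
by do 12!(case; try done).
Qed.

Theorem mainTheorem13 (T : finType) (e : rel T) (a b : 'Z_5 -> T) (c : T) :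
  in_frakD4 e -> MG_subgraph e a b c ->
  forall (i : 'Z_5) (q : T),
    e q (a (i - 1)%R) -> e q (a (i + 1)%R) -> e q (a i).
Proof.
move=> [_ [[tf mx] D]] [_ _ _ _ H] i q hq4 hq1.
have F : forall k : nat, [/\ e (a (i + k%:R)%R) c,
   e (a (i + k%:R)%R) (b (i + (k%:R + 2))%R),
   e (a (i + k%:R)%R) (b (i + (k%:R - 2))%R) &
   e (b (i + k%:R)%R) (b (i + (k%:R + 2))%R)].
  by move=> k; case: (H (i + k%:R)%R); rewrite -!GRing.addrA.
have [c0 h02 h03 g02] := F 0%N.
have [c1 h13 h14 g13] := F 1%N.
have [c2 h24 h20 g24] := F 2%N.
have [c3 h30 h31 g30] := F 3%N.
have [c4 h41 h42 g41] := F 4%N.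
have r1 : (0%:R + 2 = 2%:R :> 'Z_5)%R by apply/eqP.
have r2 : (0%:R - 2 = 3%:R :> 'Z_5)%R by apply/eqP.
have r3 : (1%:R + 2 = 3%:R :> 'Z_5)%R by apply/eqP.
have r4 : (1%:R - 2 = 4%:R :> 'Z_5)%R by apply/eqP.
have r5 : (2%:R + 2 = 4%:R :> 'Z_5)%R by apply/eqP.
have r6 : (2%:R - 2 = 0%:R :> 'Z_5)%R by apply/eqP.
have r7 : (3%:R + 2 = 0%:R :> 'Z_5)%R by apply/eqP.
have r8 : (3%:R - 2 = 1%:R :> 'Z_5)%R by apply/eqP.
have r9 : (4%:R + 2 = 1%:R :> 'Z_5)%R by apply/eqP.
have r10 : (4%:R - 2 = 2%:R :> 'Z_5)%R by apply/eqP.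
rewrite r1 in h02 g02; rewrite r2 in h03; rewrite r3 in h13 g13; rewrite r4 in h14;
rewrite r5 in h24 g24; rewrite r6 in h20; rewrite r7 in h30 g30; rewrite r8 in h31;
rewrite r9 in h41 g41; rewrite r10 in h42.
have e4 : (i - 1 = i + 4%:R)%R by congr (_ + _)%R; apply/eqP.
have e1 : (i + 1 = i + 1%:R)%R by [].
rewrite e4 in hq4.
rewrite -[i]GRing.addr0 -[0%R]/(0%:R)%R.
exact: (core tf mx D c0 c1 c2 c3 c4 h02 h03 h13 h14 h24 h20 h30 h31 h41 h42
  g02 g13 g24 g30 g41 hq4 hq1).
Qed.
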